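(* Let $\phi\in(0,1)$, $\alpha_\infty>0$, $K_0>0$, $\eta>0$, $\rho_f>0$, $\Lambda>0$, and set $\nu:=\eta/\rho_f$, $F:=\alpha_\infty/\phi$, $C_2:=FK_0/\nu$, $C_1:=4C_2FK_0/\Lambda^2$. For real $\omega$ define the JKD permeability $$K^D(\omega)=\frac{K_0}{\sqrt{1-\frac{4i\alpha_\infty^2K_0^2\rho_f\omega}{\eta\Lambda^2\phi^2}}-\frac{i\alpha_\infty K_0\rho_f\omega}{\eta\phi}}=\frac{K_0}{\sqrt{1-iC_1\omega}-iC_2\omega},$$ with the principal square root. Let $$\xi_p:=\frac{C_1+\sqrt{C_1^2+4C_2^2}}{2},\qquad \psi(u):=\frac{C_2\sqrt{u(C_1-u)}}{\pi\,[C_2^2+u(C_1-u)]}\ (0\le u\le C_1),\qquad r:=\frac{2C_2\sqrt{\xi_p(\xi_p-C_1)}}{2\xi_p-C_1}.$$ Then $\xi_p>C_1$, the measure $$dG(u)=\chi_{[0,C_1]}(u)\,\frac{\psi(u)}{u}\,du+\frac{r}{\xi_p}\,\delta_{\xi_p}$$ is a probability measure on $[0,\xi_p]$ (i.e. $\int_0^{C_1}\frac{\psi(u)}{u}du+\frac{r}{\xi_p}=1$), and for all real $\omega$ $$K^D(\omega)=\frac{\nu}{F}\int_0^{\xi_p}\frac{u\,dG(u)}{1-i\omega u}.$$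
   Context: $\chi_{[0,C_1]}$ is the indicator function of $[0,C_1]$, $du$ is Lebesgue measure and $\delta_{\xi_p}$ the Dirac measure at $\xi_p$. Physically $\phi$ is porosity, $\alpha_\infty$ infinite-frequency tortuosity, $K_0$ static permeability, $\eta$ dynamic viscosity, $\rho_f$ fluid density, $\Lambda$ the JKD length parameter. *)

(* Defs.v *)
From Stdlib Require Export Reals Lra.
Open Scope R_scope.

Definition Cx : Type := (R * R)%type.
Definition Cre (z : Cx) : R := fst z.
Definition Cim (z : Cx) : R := snd z.
Definition RtoC (a : R) : Cx := (a, 0).
Definition Ci : Cx := (0, 1).
Definition Cplus (z w : Cx) : Cx := (fst z + fst w, snd z + snd w).
Definition Copp (z : Cx) : Cx := (- fst z, - snd z).
Definition Cminus (z w : Cx) : Cx := Cplus z (Copp w).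
Definition Cmult (z w : Cx) : Cx :=
  (fst z * fst w - snd z * snd w, fst z * snd w + snd z * fst w).
Definition Cinv (z : Cx) : Cx :=
  let d := fst z * fst z + snd z * snd z in (fst z / d, - snd z / d).
Definition Cdiv (z w : Cx) : Cx := Cmult z (Cinv w).
Definition Cmod (z : Cx) : R := sqrt (fst z * fst z + snd z * snd z).

(* Principal square root: Re >= 0, and Im >= 0 on the branch cut (negative reals). *)
Definition Csqrt (z : Cx) : Cx :=
  let m := Cmod z in
  (sqrt ((m + fst z) / 2),
   (if Rlt_dec (snd z) 0 then -1 else 1) * sqrt ((m - fst z) / 2)).

Definition KD (phi alpha_inf K0 eta rho_f Lambda omega : R) : Cx :=
  Cdiv (RtoC K0)
    (Cminus
       (Csqrt (Cminus (RtoC 1)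
          (Cmult Ci (RtoC (4 * alpha_inf ^ 2 * K0 ^ 2 * rho_f * omega
                           / (eta * Lambda ^ 2 * phi ^ 2))))))
       (Cmult Ci (RtoC (alpha_inf * K0 * rho_f * omega / (eta * phi))))).

Definition improper_int_at0 (g : R -> R) (b l : R) : Prop :=
  (forall e, 0 < e < b -> inhabited (Riemann_integrable g e b)) /\
  (forall eps, 0 < eps -> exists delta, 0 < delta /\
     forall e (pr : Riemann_integrable g e b),
       0 < e < delta -> e < b -> Rabs (RiemannInt pr - l) < eps).

(* Main.v *)
From Coquelicot Require Import Coquelicot.
Require Import Defs.
From Stdlib Require Import Reals Lra.
Open Scope R_scope.

Lemma cont_eps (F : R -> R) (a : R) : continuous F a ->
  forall e, 0 < e -> exists d, 0 < d /\ forall x, Rabs (x - a) < d -> Rabs (F x - F a) < e.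
Proof.
  intros H e He.
  apply (proj1 (filterlim_locally F (F a))) with (eps := mkposreal e He) in H.
  destruct H as [d Hd]. exists d. split. apply cond_pos.
  intros x Hx. apply (Hd x). exact Hx.
Qed.

Lemma bound_cont (f : R -> R) (a b : R) : a <= b ->
  (forall x, a <= x <= b -> continuous f x) ->
  exists M, 0 <= M /\ forall x, a <= x <= b -> Rabs (f x) <= M.
Proof.
  intros Hab Hc.
  destruct (continuity_ab_maj (fun x => Rabs (f x)) a b Hab) as [Mx [H1 H2]].
  { intros c Hc'. apply continuity_pt_filterlim.
    apply (continuous_comp f Rabs). apply Hc; auto. apply continuous_Rabs. }
  exists (Rabs (f Mx)). split. apply Rabs_pos. exact H1.
Qed.

Lemma FTC_open (f F G : R -> R) (a b c : R) : a < c < b ->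
  (forall x, a <= x <= b -> continuous f x) ->
  (forall x, a < x < b -> is_derive F x (f x)) ->
  continuous F a ->
  (forall x, c < x < b -> F x = G x) -> continuous G b ->
  is_RInt f a b (G b - F a).
Proof.
  intros Hc Hfc HD HFa HFG HGb.
  assert (Hex : ex_RInt f a b) by (apply (ex_RInt_continuous (V:=R_CompleteNormedModule)); intros z Hz;
    apply Hfc; rewrite Rmin_left in Hz by lra; rewrite Rmax_right in Hz by lra; lra).
  replace (G b - F a) with (RInt f a b). apply (RInt_correct (V:=R_CompleteNormedModule)); auto.
  destruct (bound_cont f a b) as [M [HM0 HM]]; [lra|auto|].
  apply Rminus_diag_uniq. apply Rabs_eq_0.
  apply Rle_antisym; [|apply Rabs_pos].
  apply Rnot_lt_le. intros Hpos.
  set (eta := Rabs (RInt f a b - (G b - F a))) in *.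
  destruct (cont_eps F a HFa (eta/4)) as [d1 [Hd1 Hd1']]; [lra|].
  destruct (cont_eps G b HGb (eta/4)) as [d2 [Hd2 Hd2']]; [lra|].
  set (e := Rmin (Rmin (d1/2) (d2/2)) (Rmin ((c - a)/2) (Rmin ((b-c)/2) (eta / (4*(M+1)))))).
  assert (He : 0 < e).
  { unfold e. repeat apply Rmin_pos; try lra. apply Rdiv_lt_0_compat; lra. }
  assert (He1 : e <= d1/2) by (unfold e; eapply Rle_trans; [apply Rmin_l|apply Rmin_l]).
  assert (He2 : e <= d2/2) by (unfold e; eapply Rle_trans; [apply Rmin_l|apply Rmin_r]).
  assert (He3 : e <= (c-a)/2) by (unfold e; eapply Rle_trans; [apply Rmin_r|apply Rmin_l]).
  assert (He4 : e <= (b-c)/2) by (unfold e; eapply Rle_trans; [apply Rmin_r|];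
     eapply Rle_trans; [apply Rmin_r|apply Rmin_l]).
  assert (He5 : e <= eta / (4*(M+1))) by (unfold e; eapply Rle_trans; [apply Rmin_r|];
     eapply Rle_trans; [apply Rmin_r|apply Rmin_r]).
  clearbody e.
  assert (Hsub : forall x y, a <= x -> x <= y -> y <= b -> ex_RInt f x y).
  { intros x y Hx Hxy Hy. apply (ex_RInt_continuous (V:=R_CompleteNormedModule)). intros z Hz.
    rewrite Rmin_left in Hz by lra; rewrite Rmax_right in Hz by lra. apply Hfc; lra. }
  assert (Hmid : is_RInt f (a+e) (b-e) (F (b-e) - F (a+e))).
  { apply (is_RInt_derive F f).
    - intros x Hx. rewrite Rmin_left in Hx by lra; rewrite Rmax_right in Hx by lra.
      apply HD; lra.
    - intros x Hx. rewrite Rmin_left in Hx by lra; rewrite Rmax_right in Hx by lra.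
      apply Hfc; lra. }
  assert (Hsplit : RInt f a b = RInt f a (a+e) + RInt f (a+e) (b-e) + RInt f (b-e) b).
  { rewrite <- (RInt_Chasles f a (b-e) b) by (apply Hsub; lra).
    rewrite <- (RInt_Chasles f a (a+e) (b-e)) by (apply Hsub; lra). reflexivity. }
  rewrite (is_RInt_unique _ _ _ _ Hmid) in Hsplit.
  assert (B1 : Rabs (RInt f a (a+e)) <= e * M).
  { replace (e*M) with ((a+e - a)*M) by ring. apply abs_RInt_le_const; try lra.
    apply Hsub; lra. intros t Ht; apply HM; lra. }
  assert (B2 : Rabs (RInt f (b-e) b) <= e * M).
  { replace (e*M) with ((b - (b-e))*M) by ring. apply abs_RInt_le_const; try lra.
    apply Hsub; lra. intros t Ht; apply HM; lra. }
  assert (B3 : Rabs (F (a+e) - F a) < eta/4) by (apply Hd1'; replace (a+e-a) with e by ring; rewrite Rabs_right; lra).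
  assert (B4 : Rabs (G (b-e) - G b) < eta/4) by (apply Hd2'; replace (b-e-b) with (-e) by ring; rewrite Rabs_Ropp, Rabs_right; lra).
  rewrite HFG in Hsplit by lra.
  assert (B5 : e * M <= eta/4).
  { apply Rle_trans with (eta / (4*(M+1)) * M). apply Rmult_le_compat_r; lra.
    assert (0 < eta / (4*(M+1))) by (apply Rdiv_lt_0_compat; lra).
    replace (eta/4) with (eta/(4*(M+1))*M + eta/(4*(M+1))) by (field; lra). lra. }
  assert (Hf : Rabs (RInt f a b - (G b - F a)) < eta).
  { rewrite Hsplit. apply Rabs_def1.
    - pose proof (Rle_abs (RInt f a (a+e))). pose proof (Rle_abs (RInt f (b-e) b)).
      destruct (Rabs_def2 _ _ B3). destruct (Rabs_def2 _ _ B4). lra.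
    - pose proof (Rle_abs (- RInt f a (a+e))). pose proof (Rle_abs (- RInt f (b-e) b)).
      rewrite Rabs_Ropp in *.
      destruct (Rabs_def2 _ _ B3). destruct (Rabs_def2 _ _ B4). lra. }
  unfold eta in Hf. lra.
Qed.

Lemma half_param (x y S : R) : 0 < S -> S * S = x * x + y * y -> 0 < S + x ->
  let T := y / (S + x) in x = S * (1 - T^2) / (1 + T^2) /\ y = 2 * S * T / (1 + T^2).
Proof.
  intros HS HS2 HSx T.
  assert (Hy : y = T * (S + x)) by (unfold T; field; lra).
  assert (H1 : S - x = T^2 * (S + x)).
  { apply (Rmult_eq_reg_r (S + x)); [|lra].
    replace ((S - x) * (S + x)) with (S*S - x*x) by ring. rewrite HS2.
    rewrite Hy at 1 2. ring. }
  assert (Hp : 0 < 1 + T^2) by (pose proof (pow2_ge_0 T); lra).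
  assert (H2 : x * (1 + T^2) = S * (1 - T^2)).
  { replace (x * (1 + T^2)) with (x + T^2 * x) by ring.
    replace (S * (1 - T^2)) with (S - T^2 * S) by ring. 
    replace (T^2 * (S + x)) with (T^2 * S + T^2 * x) in H1 by ring. lra. }
  split.
  - rewrite <- H2. field. lra.
  - rewrite Hy at 1. replace (2 * S * T) with (T * (S * (1 - T^2) + S * (1 + T^2))) by ring.
    rewrite <- H2. field. lra.
Qed.

Lemma sqrt_sq_gt (x y : R) : 0 < y -> Rabs x < sqrt (x^2 + y^2).
Proof.
  intros Hy. rewrite <- sqrt_Rsqr_abs. apply sqrt_lt_1_alt. split.
  apply Rle_0_sqr. unfold Rsqr. nra.
Qed.

Lemma arg_derive (X Y : R -> R) X' Y' u : is_derive X u X' -> is_derive Y u Y' -> 0 < Y u ->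
  is_derive (fun v => 2 * atan (Y v / (sqrt (X v ^ 2 + Y v ^ 2) + X v))) u
    ((X u * Y' - Y u * X') / (X u ^ 2 + Y u ^ 2)).
Proof.
  intros HX HY Hy.
  pose proof (sqrt_sq_gt (X u) (Y u) Hy) as Hgt.
  assert (Hpos : 0 < X u ^ 2 + Y u ^ 2) by (assert (0 < Y u ^2) by (apply pow_lt; lra); pose proof (pow2_ge_0 (X u)); lra).
  auto_derive.
  - repeat split; try (eexists; eassumption).
    + replace (X u * (X u * 1) + Y u * (Y u * 1)) with (X u ^2 + Y u ^2) by ring. lra.
    + replace (X u * (X u * 1) + Y u * (Y u * 1)) with (X u ^2 + Y u ^2) by ring.
      pose proof (Rle_abs (- X u)). rewrite Rabs_Ropp in H. lra.
  - replace (Derive (fun x => X x) u) with X' by (symmetry; apply is_derive_unique; auto).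
    replace (Derive (fun x => Y x) u) with Y' by (symmetry; apply is_derive_unique; auto).
    replace (X u * (X u * 1) + Y u * (Y u * 1)) with (X u ^2 + Y u ^2) by ring.
    set (x := X u) in *. set (y := Y u) in *.
    assert (HS2 : sqrt (x^2+y^2) * sqrt (x^2+y^2) = x*x + y*y) by (rewrite sqrt_sqrt; lra).
    assert (HSx : 0 < sqrt (x^2+y^2) + x) by (pose proof (Rle_abs (- x)); rewrite Rabs_Ropp in H; lra).
    assert (HS : 0 < sqrt (x^2+y^2)) by (pose proof (Rabs_pos x); lra).
    destruct (half_param x y _ HS HS2 HSx) as [Ex Ey].
    set (S := sqrt (x^2+y^2)) in *. set (T := y / (S + x)) in *.
    clearbody S T x y. subst x y.
    assert (0 < 1 + T^2) by (pose proof (pow2_ge_0 T); lra).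
    assert (0 < T). { apply (Rmult_lt_reg_l (2*S/(1+T^2))). apply Rdiv_lt_0_compat; lra.
      replace (2*S/(1+T^2)*T) with (2*S*T/(1+T^2)) by (field; lra). lra. }
    field. repeat split; try lra.
    all: apply Rgt_not_eq; apply Rlt_gt; assert (0 < S*T) by (apply Rmult_lt_0_compat; lra);
      pose proof (pow2_ge_0 (S * (1 - T^2))); nra.
Qed.

Lemma argB_derive (X Y : R -> R) X' Y' u : is_derive X u X' -> is_derive Y u Y' -> 0 < Y u ->
  is_derive (fun v => PI - 2 * atan (Y v / (sqrt (X v ^ 2 + Y v ^ 2) - X v))) u
    ((X u * Y' - Y u * X') / (X u ^ 2 + Y u ^ 2)).
Proof.
  intros HX HY Hy.
  assert (HX2 : is_derive (fun v => - X v) u (- X')).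
  { apply (is_derive_opp X u X' HX). }
  pose proof (arg_derive (fun v => - X v) Y (- X') Y' u HX2 HY Hy) as H.
  simpl in H.
  replace ((X u * Y' - Y u * X') / (X u ^ 2 + Y u ^ 2)) with
    (0 - ((- X u * Y' - Y u * - X') / ((- X u) ^ 2 + Y u ^ 2))) by (field;
      assert (0 < Y u ^2) by (apply pow_lt; lra); pose proof (pow2_ge_0 (X u)); nra).
  apply (is_derive_minus (fun _ => PI) _ u 0). apply (is_derive_const (K:=R_AbsRing) (V:=R_NormedModule) PI u).
  eapply is_derive_ext; [|exact H]. intros t. simpl.
  replace (- X t * (- X t * 1) + Y t * (Y t * 1)) with (X t ^ 2 + Y t ^ 2) by ring.
  replace (sqrt (X t ^ 2 + Y t ^ 2) + - X t) with (sqrt (X t ^ 2 + Y t ^ 2) - X t) by ring.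
  reflexivity.
Qed.

Lemma argAB_eq (x y : R) : 0 < y ->
  2 * atan (y / (sqrt (x ^ 2 + y ^ 2) + x)) = PI - 2 * atan (y / (sqrt (x ^ 2 + y ^ 2) - x)).
Proof.
  intros Hy.
  pose proof (sqrt_sq_gt x y Hy) as Hgt.
  assert (Hp : 0 < x^2 + y^2) by (assert (0 < y^2) by (apply pow_lt; lra); pose proof (pow2_ge_0 x); lra).
  assert (HS2 : sqrt (x^2+y^2) * sqrt (x^2+y^2) = x^2+y^2) by (rewrite sqrt_sqrt; lra).
  assert (H1 : 0 < sqrt (x^2+y^2) + x) by (pose proof (Rle_abs (- x)); rewrite Rabs_Ropp in H; lra).
  assert (H2 : 0 < sqrt (x^2+y^2) - x) by (pose proof (Rle_abs x); lra).
  assert (Ha : 0 < y / (sqrt (x ^ 2 + y ^ 2) + x)) by (apply Rdiv_lt_0_compat; lra).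
  replace (y / (sqrt (x ^ 2 + y ^ 2) - x)) with (/ (y / (sqrt (x ^ 2 + y ^ 2) + x))).
  rewrite atan_inv by exact Ha. field.
  set (S := sqrt (x^2+y^2)) in *. apply (Rmult_eq_reg_r (y * (S - x) * (S+x))).
  field_simplify; try lra. nra. 
  apply Rmult_integral_contrapositive_currified; [|lra].
  apply Rmult_integral_contrapositive_currified; lra.
Qed.

Definition sq (C1 u : R) := sqrt (u * (C1 - u)).
Definition ArgA (C1 al be ga u : R) :=
  2 * atan (ga * sq C1 u / (sqrt ((al - be * u) ^ 2 + (ga * sq C1 u) ^ 2) + (al - be * u))).
Definition ArgB (C1 al be ga u : R) :=
  PI - 2 * atan (ga * sq C1 u / (sqrt ((al - be * u) ^ 2 + (ga * sq C1 u) ^ 2) - (al - be * u))).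

Lemma sq_pos C1 u : 0 < u < C1 -> 0 < sq C1 u.
Proof. intros H. unfold sq. apply sqrt_lt_R0. nra. Qed.

Lemma sq_sq C1 u : 0 <= u <= C1 -> sq C1 u * sq C1 u = u * (C1 - u).
Proof. intros H. unfold sq. apply sqrt_sqrt. nra. Qed.

Lemma sq_derive C1 u : 0 < u < C1 -> is_derive (sq C1) u ((C1 - 2 * u) / (2 * sq C1 u)).
Proof.
  intros H. unfold sq. auto_derive. nra.
  replace (C1 + - u) with (C1 - u) by ring.
  field. apply Rgt_not_eq. apply sqrt_lt_R0. nra.
Qed.

Lemma ArgA_derive C1 al be ga u : 0 < ga -> 0 < u < C1 ->
  is_derive (ArgA C1 al be ga) u
    (ga * ((al - be * u) * (C1 - 2 * u) + 2 * be * (u * (C1 - u)))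
       / (2 * sq C1 u * ((al - be * u) ^ 2 + ga ^ 2 * (u * (C1 - u))))).
Proof.
  intros Hg Hu.
  assert (HX : is_derive (fun v => al - be * v) u (- be)) by (auto_derive; auto; ring).
  assert (HY : is_derive (fun v => ga * sq C1 v) u (ga * ((C1 - 2 * u) / (2 * sq C1 u)))).
  { apply (is_derive_scal (sq C1) u ga). apply sq_derive; auto. }
  pose proof (sq_pos C1 u Hu) as Hs. pose proof (sq_sq C1 u ltac:(lra)) as Hs2.
  pose proof (arg_derive _ _ _ _ u HX HY ltac:(simpl; nra)) as H.
  simpl in H. unfold ArgA.
  match type of H with is_derive _ _ ?d => replace (ga * _ / _) with d; [exact H|] end.
  set (s := sq C1 u) in *. clearbody s.
  rewrite <- Hs2. field. split; [|lra]. 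
  assert (0 < ga^2*(s*s)) by (apply Rmult_lt_0_compat; [apply pow_lt; lra|nra]). pose proof (pow2_ge_0 (al - be*u)). lra.
Qed.

Lemma cR_mult (f g : R -> R) x : continuous f x -> continuous g x -> continuous (fun y => f y * g y) x.
Proof. intros; apply (continuous_mult f g); auto. Qed.
Lemma cR_plus (f g : R -> R) x : continuous f x -> continuous g x -> continuous (fun y => f y + g y) x.
Proof. intros; apply (continuous_plus f g); auto. Qed.
Lemma cR_minus (f g : R -> R) x : continuous f x -> continuous g x -> continuous (fun y => f y - g y) x.
Proof. intros; apply (continuous_minus f g); auto. Qed.
Lemma cR_div (f g : R -> R) x : continuous f x -> continuous g x -> g x <> 0 -> continuous (fun y => f y / g y) x.
Proof. intros; apply (continuous_mult f (fun y => / g y)); auto. apply continuous_Rinv_comp; auto. Qed.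
Lemma cR_const (c x : R) : continuous (fun _ => c) x.
Proof. apply continuous_const. Qed.
Lemma cR_id (x : R) : continuous (fun y => y) x.
Proof. apply continuous_id. Qed.
Lemma cR_sqrt (f : R -> R) x : continuous f x -> continuous (fun y => sqrt (f y)) x.
Proof. intros; apply continuous_sqrt_comp; auto. Qed.
Lemma cR_atan (f : R -> R) x : continuous f x -> continuous (fun y => atan (f y)) x.
Proof. intros; apply continuous_atan_comp; auto. Qed.
Lemma cR_ln (f : R -> R) x : continuous f x -> 0 < f x -> continuous (fun y => ln (f y)) x.
Proof. intros; apply (continuous_comp f ln); auto. apply continuous_ln; auto. Qed.
Lemma cR_pow2 (f : R -> R) x : continuous f x -> continuous (fun y => f y ^ 2) x.
Proof. intros. apply (continuous_ext (fun y => f y * (f y * 1))). intros; simpl; ring.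
  apply cR_mult; auto. apply cR_mult; auto. apply cR_const. Qed.

Lemma cR_scal (c x : R) : continuous (Rmult c) x.
Proof. apply (cR_mult (fun _ => c) (fun y => y)). apply cR_const. apply cR_id. Qed.

Lemma cR_subc (c x : R) : continuous (Rminus c) x.
Proof. apply (cR_minus (fun _ => c) (fun y => y)). apply cR_const. apply cR_id. Qed.
Lemma cR_addc (c x : R) : continuous (Rplus c) x.
Proof. apply (cR_plus (fun _ => c) (fun y => y)). apply cR_const. apply cR_id. Qed.

Lemma sq_cont C1 x : continuous (sq C1) x.
Proof. unfold sq. apply cR_sqrt. apply cR_mult. apply cR_id. apply cR_minus. apply cR_const. apply cR_id. Qed.

Ltac contR := repeat match goal with
  | |- continuous (fun y => _ / _) _ => apply cR_div
  | |- continuous (fun y => _ * _) _ => apply cR_mult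
  | |- continuous (fun y => _ + _) _ => apply cR_plus
  | |- continuous (fun y => _ - _) _ => apply cR_minus
  | |- continuous (fun y => sqrt _) _ => apply cR_sqrt
  | |- continuous (fun y => atan _) _ => apply cR_atan
  | |- continuous (fun y => _ ^ 2) _ => apply cR_pow2
  | |- continuous (fun y => sq _ y) _ => apply sq_cont
  | |- continuous (sq _) _ => apply sq_cont
  | |- continuous (fun y => y) _ => apply cR_id
  | |- continuous (Rmult _) _ => apply cR_scal
  | |- continuous (Rminus _) _ => apply cR_subc
  | |- continuous (Rplus _) _ => apply cR_addc
  | |- continuous (fun _ => _) _ => apply cR_const
  end.

Lemma sq_0 C1 : sq C1 0 = 0.
Proof. unfold sq. rewrite Rmult_0_l. apply sqrt_0. Qed.
Lemma sq_C1 C1 : sq C1 C1 = 0.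
Proof. unfold sq. rewrite Rminus_diag, Rmult_0_r. apply sqrt_0. Qed.

Lemma ArgA_cont0 C1 al be ga : 0 < al -> continuous (ArgA C1 al be ga) 0 /\ ArgA C1 al be ga 0 = 0.
Proof.
  intros Hal. unfold ArgA.
  assert (E : sqrt ((al - be * 0) ^ 2 + (ga * sq C1 0) ^ 2) = al).
  { rewrite sq_0. replace ((al - be * 0) ^ 2 + (ga * 0) ^ 2) with (al * al) by ring. apply sqrt_square. lra. }
  split.
  - contR. rewrite E. lra.
  - rewrite E, sq_0. replace (ga * 0 / (al + (al - be * 0))) with 0 by (field; lra). rewrite atan_0. ring.
Qed.

Lemma ArgB_contC1 C1 al be ga : al - be * C1 < 0 -> continuous (ArgB C1 al be ga) C1 /\ ArgB C1 al be ga C1 = PI.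
Proof.
  intros Hal. unfold ArgB.
  assert (E : sqrt ((al - be * C1) ^ 2 + (ga * sq C1 C1) ^ 2) = - (al - be * C1)).
  { rewrite sq_C1. replace ((al - be * C1) ^ 2 + (ga * 0) ^ 2) with ((-(al-be*C1)) * (-(al-be*C1))) by ring. apply sqrt_square. lra. }
  split.
  - contR. rewrite E. lra.
  - rewrite E, sq_C1. replace (ga * 0 / (- (al - be * C1) - (al - be * C1))) with 0 by (field; lra). rewrite atan_0. ring.
Qed.

Lemma ArgA_eq_B C1 al be ga u : 0 < ga -> 0 < u < C1 -> ArgA C1 al be ga u = ArgB C1 al be ga u.
Proof.
  intros Hg Hu. unfold ArgA, ArgB. apply argAB_eq.
  apply Rmult_lt_0_compat; auto. apply sq_pos; auto.
Qed.

Lemma tpar C1 u : 0 < u < C1 -> exists t, 0 < t /\ u = C1 * t^2 / (1 + t^2) /\ sq C1 u = C1 * t / (1 + t^2).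
Proof.
  intros Hu. pose proof (sq_pos C1 u Hu) as Hs. pose proof (sq_sq C1 u ltac:(lra)) as Hs2.
  set (s := sq C1 u) in *. clearbody s.
  exists (s / (C1 - u)).
  assert (Ht : 0 < s / (C1 - u)) by (apply Rdiv_lt_0_compat; lra).
  set (t := s / (C1 - u)) in *.
  assert (Hst : s = t * (C1 - u)) by (unfold t; field; lra). clearbody t.
  assert (Hp : 0 < 1 + t^2) by (pose proof (pow2_ge_0 t); lra).
  assert (H1 : u * (1 + t^2) = C1 * t^2).
  { subst s. assert (t * t * (C1 - u) = u) .
    { apply (Rmult_eq_reg_r (C1 - u)); [|lra]. rewrite <- Hs2. ring. }
    nra. }
  assert (Hu' : u = C1 * t^2 / (1 + t^2)) by (rewrite <- H1; field; lra).
  split; [auto|split]; auto.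
  rewrite Hst, Hu'. field. lra.
Qed.

Lemma der_divc (f : R -> R) u d c : is_derive f u d -> is_derive (fun v => f v / c) u (d / c).
Proof.
  intros H. auto_derive. exists d; auto.
  replace (Derive (fun x => f x) u) with d by (symmetry; apply is_derive_unique; auto). 
  unfold Rdiv. ring.
Qed.

Lemma Phi_derive C1 p k u : 0 < C1 -> 0 < k -> k^2 * p = p - C1 -> (C1 < p \/ p < 0) -> 0 < u < C1 ->
  is_derive (fun v => ArgA C1 C1 (1 + k^2) (2 * k) v / (k * p)) u (1 / ((p - u) * sq C1 u)).
Proof.
  intros HC Hk Hkp Hp Hu.
  assert (Hp0 : p <> 0) by lra.
  assert (Hpu : p - u <> 0) by lra.
  pose proof (ArgA_derive C1 C1 (1 + k^2) (2*k) u ltac:(lra) Hu) as H.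
  apply (der_divc _ _ _ (k*p)) in H.
  match type of H with is_derive _ _ ?d => replace (1 / ((p - u) * sq C1 u)) with d; [exact H|] end.
  pose proof (sq_pos C1 u Hu) as Hs.
  set (s := sq C1 u) in *. clearbody s.
  assert (HC1 : C1 = p * (1 - k^2)) by lra.
  assert (Hk1 : 1 - k^2 <> 0) by (intro E; rewrite E in HC1; lra).
  subst C1. field. repeat split; try lra.
  replace ((p * (1 - k ^ 2) - (1 + k ^ 2) * u) ^ 2 + 4 * k ^ 2 * (u * (p * (1 - k ^ 2) - u)))
    with (((1 - k^2) * (p - u))^2) by ring.
  apply pow_nonzero. apply Rmult_integral_contrapositive_currified; auto.
Qed.

Lemma P_derive C1 sx m lam u : 0 < C1 -> 0 < sx -> m = 2 * sx^2 - 1 -> lam = 4 * sx^2 * (sx^2 - 1) / C1^2 ->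
  0 < u < C1 ->
  is_derive (ArgA C1 C1 (1 + m) (2 * sx)) u (sx * (C1 + (m - 1) * u) / (C1 * sq C1 u * (1 + lam * u^2))).
Proof.
  intros HC Hs Hm Hl Hu.
  pose proof (ArgA_derive C1 C1 (1 + m) (2*sx) u ltac:(lra) Hu) as H.
  match type of H with is_derive _ _ ?d => replace (sx * _ / _) with d; [exact H|] end.
  pose proof (sq_pos C1 u Hu) as Hsp.
  set (s := sq C1 u) in *. clearbody s. subst m lam.
  assert (E : (C1 - (1 + (2 * sx ^ 2 - 1)) * u) ^ 2 + (2 * sx) ^ 2 * (u * (C1 - u))
     = C1^2 * (1 + 4 * sx ^ 2 * (sx ^ 2 - 1) / C1 ^ 2 * u ^ 2)) by (field; lra).
  rewrite E.
  assert (0 < C1 ^ 2 * (1 + 4 * sx ^ 2 * (sx ^ 2 - 1) / C1 ^ 2 * u ^ 2)).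
  { rewrite <- E. pose proof (pow2_ge_0 (C1 - (1 + (2 * sx ^ 2 - 1)) * u)).
    assert (0 < (2 * sx) ^ 2 * (u * (C1 - u))) by (apply Rmult_lt_0_compat; [apply pow_lt; lra | nra]). lra. }
  assert (0 < 1 + 4 * sx ^ 2 * (sx ^ 2 - 1) / C1 ^ 2 * u ^ 2).
  { apply (Rmult_lt_reg_l (C1^2)). apply pow_lt; lra. lra. }
  field. repeat split; lra.
Qed.

Definition Lg (C1 m sg u : R) :=
  ln (C1 + (m - 1) * u + 2 * sg * sq C1 u) - ln (C1 + (m - 1) * u - 2 * sg * sq C1 u).

Lemma N_pos C1 sg u e : 0 < C1 -> 0 <= sg -> 0 <= u <= C1 -> (e = 1 \/ e = -1) ->
  0 < C1 + 2 * sg^2 * u + e * (2 * sg * sq C1 u).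
Proof.
  intros HC Hs Hu He.
  pose proof (sq_sq C1 u Hu) as Hs2.
  assert (Hsq : 0 <= sq C1 u) by (unfold sq; apply sqrt_pos).
  set (s := sq C1 u) in *. clearbody s.
  set (A := C1 + 2 * sg^2 * u). set (B := 2 * sg * s).
  assert (HA : 0 < A) by (unfold A; pose proof (pow2_ge_0 sg); nra).
  assert (HB : 0 <= B) by (unfold B; nra).
  assert (HAB : B * B < A * A).
  { unfold A, B. replace (2 * sg * s * (2 * sg * s)) with (4 * sg^2 * (s * s)) by ring. rewrite Hs2.
    pose proof (pow2_ge_0 sg). pose proof (pow2_ge_0 u). 
    assert (0 <= sg^2 * u^2) by (apply Rmult_le_pos; lra). nra. }
  assert (B < A) by nra.
  destruct He; subst e; lra.
Qed.

Lemma Lg_derive C1 sg m lam u : 0 < C1 -> 0 <= sg -> m = 2 * sg^2 + 1 -> lam = 4 * sg^2 * (sg^2 + 1) / C1^2 ->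
  0 < u < C1 ->
  is_derive (Lg C1 m sg) u (2 * sg * (C1 - (m + 1) * u) / (C1 * sq C1 u * (1 + lam * u^2))).
Proof.
  intros HC Hs Hm Hl Hu.
  pose proof (N_pos C1 sg u 1 HC ltac:(lra) ltac:(lra) ltac:(auto)) as N1.
  pose proof (N_pos C1 sg u (-1) HC ltac:(lra) ltac:(lra) ltac:(auto)) as N2.
  pose proof (sq_derive C1 u Hu) as Hd.
  subst m. unfold Lg. auto_derive.
  - repeat split; try (eexists; eassumption).
    + replace (C1 + (2 * sg ^ 2 + 1 - 1) * u + 2 * sg * sq C1 u) with (C1 + 2 * sg^2 * u + 1 * (2 * sg * sq C1 u)) by ring. lra.
    + replace (C1 + (2 * sg ^ 2 + 1 - 1) * u - 2 * sg * sq C1 u) with (C1 + 2 * sg^2 * u + -1 * (2 * sg * sq C1 u)) by ring. lra.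
  - replace (Derive (fun x => sq C1 x) u) with ((C1 - 2 * u) / (2 * sq C1 u)) by (symmetry; apply is_derive_unique; auto).
    destruct (tpar C1 u Hu) as [t [Ht [Hu' Hs']]].
    rewrite Hs' in *. clear Hd Hs'. subst u lam.
    assert (Hp : 0 < 1 + t^2) by (pose proof (pow2_ge_0 t); lra).
    field. repeat split; try lra.
    + assert (0 <= 4 * sg ^ 2 * (sg ^ 2 + 1) * t ^ 4).
      { pose proof (pow2_ge_0 sg). pose proof (pow2_ge_0 (t^2)).
        replace (t^4) with ((t^2)^2) by ring.
        apply Rmult_le_pos; [|lra]. apply Rmult_le_pos; lra. }
      assert (0 < (1 + t^2)^2) by (apply pow_lt; lra). lra.
    + replace (C1 * (1 + t ^ 2) + (2 * (sg * sg) + 1 - 1) * (C1 * t ^ 2) + - (2 * sg * (C1 * t)))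
        with ((1 + t^2) * (C1 + 2 * sg ^ 2 * (C1 * t ^ 2 / (1 + t ^ 2)) + -1 * (2 * sg * (C1 * t / (1 + t ^ 2)))))
        by (field; lra).
      apply Rgt_not_eq. apply Rmult_lt_0_compat; lra.
    + replace (C1 * (1 + t ^ 2) + (2 * (sg * sg) + 1 - 1) * (C1 * t ^ 2) + 2 * sg * (C1 * t))
        with ((1 + t^2) * (C1 + 2 * sg ^ 2 * (C1 * t ^ 2 / (1 + t ^ 2)) + 1 * (2 * sg * (C1 * t / (1 + t ^ 2)))))
        by (field; lra).
      apply Rgt_not_eq. apply Rmult_lt_0_compat; lra.
Qed.

Lemma dR_plus (f g : R -> R) x df dg : is_derive f x df -> is_derive g x dg ->
  is_derive (fun y => f y + g y) x (df + dg).
Proof. intros; apply (is_derive_plus f g); auto. Qed.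

Lemma Lg_cont C1 m sg u0 : 0 < C1 -> 0 <= sg -> m = 2 * sg^2 + 1 -> 0 <= u0 <= C1 -> continuous (Lg C1 m sg) u0.
Proof.
  intros HC Hs Hm Hu. subst m. unfold Lg.
  apply cR_minus; apply cR_ln; try contR.
  - replace (C1 + (2 * sg ^ 2 + 1 - 1) * u0 + 2 * sg * sq C1 u0) with (C1 + 2 * sg^2 * u0 + 1 * (2 * sg * sq C1 u0)) by ring.
    apply N_pos; auto.
  - replace (C1 + (2 * sg ^ 2 + 1 - 1) * u0 - 2 * sg * sq C1 u0) with (C1 + 2 * sg^2 * u0 + -1 * (2 * sg * sq C1 u0)) by ring.
    apply N_pos; auto.
Qed.

Lemma Lg_0 C1 m sg : Lg C1 m sg 0 = 0.
Proof. unfold Lg. rewrite sq_0. replace (C1 + (m - 1) * 0 + 2 * sg * 0) with (C1 + (m - 1) * 0 - 2 * sg * 0) by ring. ring. Qed.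
Lemma Lg_C1 C1 m sg : Lg C1 m sg C1 = 0.
Proof. unfold Lg. rewrite sq_C1. replace (C1 + (m - 1) * C1 + 2 * sg * 0) with (C1 + (m - 1) * C1 - 2 * sg * 0) by ring. ring. Qed.

Definition Fn C1 p1 k1 p2 k2 sx sg A B a b u :=
  A * (ArgA C1 C1 (1 + k1^2) (2 * k1) u / (k1 * p1)) + B * (ArgA C1 C1 (1 + k2^2) (2 * k2) u / (k2 * p2))
  + a * ArgA C1 C1 (1 + (2 * sx^2 - 1)) (2 * sx) u + b * Lg C1 (2 * sx^2 - 1) sg u.
Definition Gn C1 p1 k1 p2 k2 sx sg A B a b u :=
  A * (ArgB C1 C1 (1 + k1^2) (2 * k1) u / (k1 * p1)) + B * (ArgB C1 C1 (1 + k2^2) (2 * k2) u / (k2 * p2))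
  + a * ArgB C1 C1 (1 + (2 * sx^2 - 1)) (2 * sx) u + b * Lg C1 (2 * sx^2 - 1) sg u.

Lemma MainInt C1 p1 k1 p2 k2 sx sg A B a b e (f : R -> R) :
  0 < C1 -> C1 < p1 -> p2 < 0 -> 0 < k1 -> 0 < k2 -> k1^2 * p1 = p1 - C1 -> k2^2 * p2 = p2 - C1 ->
  0 <= sg -> 0 < sx -> sx^2 = sg^2 + 1 -> 0 <= e < C1 ->
  (forall u, e <= u <= C1 -> continuous f u) ->
  (forall u, e < u < C1 -> f u = A / ((p1 - u) * sq C1 u) + B / ((p2 - u) * sq C1 u)
     + (a * (sx * (C1 + (2 * sx^2 - 1 - 1) * u)) + b * (2 * sg * (C1 - (2 * sx^2 - 1 + 1) * u)))
       / (C1 * sq C1 u * (1 + 4 * sx^2 * (sx^2 - 1) / C1^2 * u^2))) ->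
  is_RInt f e C1 (A * PI / (k1 * p1) + B * PI / (k2 * p2) + a * PI - Fn C1 p1 k1 p2 k2 sx sg A B a b e).
Proof.
  intros HC Hp1 Hp2 Hk1 Hk2 Hkp1 Hkp2 Hsg Hsx Hsxsg He Hfc Hf.
  assert (Hder : forall x, 0 < x < C1 -> is_derive (Fn C1 p1 k1 p2 k2 sx sg A B a b) x
     (A / ((p1 - x) * sq C1 x) + B / ((p2 - x) * sq C1 x)
     + (a * (sx * (C1 + (2 * sx^2 - 1 - 1) * x)) + b * (2 * sg * (C1 - (2 * sx^2 - 1 + 1) * x)))
       / (C1 * sq C1 x * (1 + 4 * sx^2 * (sx^2 - 1) / C1^2 * x^2)))).
  { intros x Hx. unfold Fn.
    pose proof (Phi_derive C1 p1 k1 x HC Hk1 Hkp1 ltac:(lra) Hx) as D1.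
    pose proof (Phi_derive C1 p2 k2 x HC Hk2 Hkp2 ltac:(lra) Hx) as D2.
    pose proof (P_derive C1 sx (2 * sx^2 - 1) (4 * sx^2 * (sx^2 - 1) / C1^2) x HC Hsx eq_refl eq_refl Hx) as D3.
    pose proof (Lg_derive C1 sg (2 * sx^2 - 1) (4 * sx^2 * (sx^2 - 1) / C1^2) x HC Hsg ltac:(lra)
       ltac:(rewrite Hsxsg; field; lra) Hx) as D4.
    apply (is_derive_scal _ _ A) in D1. apply (is_derive_scal _ _ B) in D2.
    apply (is_derive_scal _ _ a) in D3. apply (is_derive_scal _ _ b) in D4.
    match goal with |- is_derive _ _ ?d => replace d with
      (A * (1 / ((p1 - x) * sq C1 x)) + B * (1 / ((p2 - x) * sq C1 x)) +
       a * (sx * (C1 + (2 * sx ^ 2 - 1 - 1) * x) / (C1 * sq C1 x * (1 + 4 * sx ^ 2 * (sx ^ 2 - 1) / C1 ^ 2 * x ^ 2))) +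
       b * (2 * sg * (C1 - (2 * sx ^ 2 - 1 + 1) * x) / (C1 * sq C1 x * (1 + 4 * sx ^ 2 * (sx ^ 2 - 1) / C1 ^ 2 * x ^ 2)))) end.
    - apply dR_plus; [apply dR_plus; [apply dR_plus|]|]; auto.
    - pose proof (sq_pos C1 x Hx).
      assert (0 <= 4 * sx ^ 2 * (sx ^ 2 - 1) / C1 ^ 2 * x ^ 2).
      { apply Rmult_le_pos; [|apply pow2_ge_0]. apply Rmult_le_pos; [|left; apply Rinv_0_lt_compat, pow_lt; lra].
        apply Rmult_le_pos. pose proof (pow2_ge_0 sx); lra. pose proof (pow2_ge_0 sg); lra. }
      assert (0 <= 4 * sx ^ 2 * (sx ^ 2 - 1) * x ^ 2).
      { apply Rmult_le_pos; [|apply pow2_ge_0]. apply Rmult_le_pos. pose proof (pow2_ge_0 sx); lra. pose proof (pow2_ge_0 sg); lra. }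
      assert (0 < C1^2) by (apply pow_lt; lra).
      field. repeat split; try lra. }
  assert (Q1 : C1 - (1 + k1^2) * C1 < 0) by (replace (C1 - (1 + k1^2) * C1) with (-(k1^2*C1)) by ring;
    assert (0 < k1^2*C1) by (apply Rmult_lt_0_compat; [apply pow_lt|]; lra); lra).
  assert (Q2 : C1 - (1 + k2^2) * C1 < 0) by (replace (C1 - (1 + k2^2) * C1) with (-(k2^2*C1)) by ring;
    assert (0 < k2^2*C1) by (apply Rmult_lt_0_compat; [apply pow_lt|]; lra); lra).
  assert (Q3 : C1 - (1 + (2 * sx^2 - 1)) * C1 < 0) by (replace (C1 - (1 + (2 * sx^2 - 1)) * C1) with (-((2*sx^2-1)*C1)) by ring;
    assert (0 < (2*sx^2-1)*C1) by (apply Rmult_lt_0_compat; [pose proof (pow2_ge_0 sg)|]; lra); lra).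
  set (c := (e + C1) / 2).
  replace (A * PI / (k1 * p1) + B * PI / (k2 * p2) + a * PI - Fn C1 p1 k1 p2 k2 sx sg A B a b e)
    with (Gn C1 p1 k1 p2 k2 sx sg A B a b C1 - Fn C1 p1 k1 p2 k2 sx sg A B a b e).
  apply (FTC_open f _ _ e C1 c).
  - unfold c; lra.
  - auto.
  - intros x Hx. rewrite Hf by lra. apply Hder; lra.
  - destruct (Req_dec e 0) as [E0|E0].
    + subst e. unfold Fn. contR.
      all: try (apply (proj1 (ArgA_cont0 _ _ _ _ HC))).
      all: try (apply Lg_cont; try lra; rewrite Hsxsg; ring).
      all: try (apply Rmult_integral_contrapositive_currified; lra).
    + apply (ex_derive_continuous (K:=R_AbsRing) (V:=R_NormedModule)). eexists. apply Hder. lra.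
  - intros x Hx. unfold c in Hx. unfold Fn, Gn. rewrite !ArgA_eq_B by lra. reflexivity.
  - unfold Gn. contR.
    + exact (proj1 (ArgB_contC1 _ _ _ _ Q1)).
    + apply Rmult_integral_contrapositive_currified; lra.
    + exact (proj1 (ArgB_contC1 _ _ _ _ Q2)).
    + apply Rmult_integral_contrapositive_currified; lra.
    + exact (proj1 (ArgB_contC1 _ _ _ _ Q3)).
    + apply Lg_cont; [lra|lra| rewrite Hsxsg; ring | lra].
  - unfold Gn. rewrite (Lg_C1 C1 (2*sx^2-1) sg).
    rewrite (proj2 (ArgB_contC1 _ _ _ _ Q1)), (proj2 (ArgB_contC1 _ _ _ _ Q2)), (proj2 (ArgB_contC1 _ _ _ _ Q3)).
    field. lra.
Qed.

Lemma Fn_cont0 C1 p1 k1 p2 k2 sx sg A B a b :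
  0 < C1 -> 0 <= sg -> sx^2 = sg^2 + 1 -> k1 * p1 <> 0 -> k2 * p2 <> 0 ->
  continuous (Fn C1 p1 k1 p2 k2 sx sg A B a b) 0 /\ Fn C1 p1 k1 p2 k2 sx sg A B a b 0 = 0.
Proof.
  intros HC Hsg Hsxsg H1 H2. split.
  - unfold Fn. contR.
    all: try (apply (proj1 (ArgA_cont0 _ _ _ _ HC))).
    all: try (apply Lg_cont; try lra; rewrite Hsxsg; ring).
    all: auto.
  - unfold Fn. rewrite Lg_0, !(proj2 (ArgA_cont0 _ _ _ _ HC)). unfold Rdiv. ring.
Qed.

Lemma stage2 (P A B c0 c1 xi xp C1 lam m u s : R) :
  s <> 0 -> C1 <> 0 -> m <> 0 -> xi - u <> 0 -> xp - u <> 0 -> 1 + lam * u^2 <> 0 ->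
  P = A / (xi - u) + B / (xp - u) + (c0 + c1 * u) / (1 + lam * u^2) ->
  P / s = A / ((xi - u) * s) + B / ((xp - u) * s)
    + (((m + 1) * c0 + C1 * c1) / (2 * m) * (C1 + (m - 1) * u) + ((m - 1) * c0 - C1 * c1) / (2 * m) * (C1 - (m + 1) * u))
      / (C1 * s * (1 + lam * u^2)).
Proof. intros. subst P. field. repeat split; auto. Qed.

Lemma stage1_re (K xi C2 lam v : R) :
  let xp := - C2^2 / xi in let C1 := xi + xp in
  let a1 := 1 / ((xi - xp) * (1 + lam * xi^2)) in
  let a2 := 1 / ((xi - xp) * (1 + lam * xp^2)) in
  0 < xi -> 0 < C2 -> 0 <= lam -> xi - v <> 0 -> xp - v <> 0 ->
  K * (v * (C1 - v)) / ((C2^2 + v * (C1 - v)) * (1 + lam * v^2))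
  = K * xi * xp * a1 / (xi - v) + (- K * xi * xp * a2) / (xp - v)
    + (K * (a2 * xi - a1 * xp) + K * xi * xp * lam * (a1 - a2) * v) / (1 + lam * v^2).
Proof.
  intros xp C1 a1 a2 Hxi HC2 Hl H1 H2.
  assert (0 < C2^2) by (apply pow_lt; lra).
  assert (Hxp : xp < 0) by (unfold xp; apply Ropp_lt_cancel; rewrite Ropp_0; unfold Rdiv; rewrite <- Ropp_mult_distr_l, Ropp_involutive; apply Rdiv_lt_0_compat; lra).
  assert (HE : C2^2 + v * (C1 - v) = (xi - v) * (v - xp)) by (unfold C1, xp; field; lra).
  rewrite HE.
  assert (0 <= lam * v^2) by (apply Rmult_le_pos; [lra|apply pow2_ge_0]).
  assert (0 <= lam * xi^2) by (apply Rmult_le_pos; [lra|apply pow2_ge_0]).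
  assert (0 <= lam * xp^2) by (apply Rmult_le_pos; [lra|apply pow2_ge_0]).
  unfold a1, a2, C1. clearbody xp. field. repeat split; lra.
Qed.

Lemma stage1_im (K xi C2 lam v : R) :
  let xp := - C2^2 / xi in let C1 := xi + xp in
  let a1 := 1 / ((xi - xp) * (1 + lam * xi^2)) in
  let a2 := 1 / ((xi - xp) * (1 + lam * xp^2)) in
  0 < xi -> 0 < C2 -> 0 <= lam -> xi - v <> 0 -> xp - v <> 0 ->
  K * v * (v * (C1 - v)) / ((C2^2 + v * (C1 - v)) * (1 + lam * v^2))
  = K * xi * xp * xi * a1 / (xi - v) + (- K * xi * xp * xp * a2) / (xp - v)
    + (K * xi * xp * (a2 - a1) + K * (a2 * xi - a1 * xp) * v) / (1 + lam * v^2).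
Proof.
  intros xp C1 a1 a2 Hxi HC2 Hl H1 H2.
  assert (0 < C2^2) by (apply pow_lt; lra).
  assert (Hxp : xp < 0) by (unfold xp; apply Ropp_lt_cancel; rewrite Ropp_0; unfold Rdiv; rewrite <- Ropp_mult_distr_l, Ropp_involutive; apply Rdiv_lt_0_compat; lra).
  assert (HE : C2^2 + v * (C1 - v) = (xi - v) * (v - xp)) by (unfold C1, xp; field; lra).
  rewrite HE.
  assert (0 <= lam * v^2) by (apply Rmult_le_pos; [lra|apply pow2_ge_0]).
  assert (0 <= lam * xi^2) by (apply Rmult_le_pos; [lra|apply pow2_ge_0]).
  assert (0 <= lam * xp^2) by (apply Rmult_le_pos; [lra|apply pow2_ge_0]).
  unfold a1, a2, C1. clearbody xp. field. repeat split; lra.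
Qed.

Lemma pow2_neg_pos a : 0 < a -> 0 < (- a)^2.
Proof. intros. replace ((-a)^2) with (a^2) by ring. apply pow_lt; auto. Qed.

Ltac nn := match goal with
  | |- 0 <= ?a * ?b => apply Rmult_le_pos; nn
  | |- 0 <= ?a ^ 2 => apply pow2_ge_0
  | |- 0 <= ?a + ?b => apply Rplus_le_le_0_compat; nn
  | |- _ => lra
  end.
Ltac pos := match goal with
  | |- 0 < ?a * ?b => apply Rmult_lt_0_compat; pos
  | |- 0 < (- ?a) ^ 2 => apply pow2_neg_pos; pos
  | |- 0 < ?a ^ ?n => apply pow_lt; pos
  | |- 0 < ?a + ?b => first [ apply Rplus_lt_le_0_compat; [pos | nn] | apply Rplus_le_lt_0_compat; [nn | pos] ]
  | |- _ => lra
  end.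
Ltac possum := apply Rgt_not_eq, Rlt_gt; pos.

Lemma final_alg_side (xi C2 q : R) : 0 < xi -> 0 < C2 -> 0 < q -> 0 < xi + - C2^2 / xi ->
  0 < xi * xi + - C2 ^ 2 /\ 0 < q*q+1 /\ (q*q-1)^2 * xi^2 >= 0.
Proof.
  intros. split; [|split].
  - apply (Rmult_lt_reg_r (/ xi)). apply Rinv_0_lt_compat; lra. rewrite Rmult_0_l.
    replace ((xi * xi + - C2 ^ 2) * / xi) with (xi + - C2 ^ 2 / xi) by (field; lra). lra.
  - nra.
  - apply Rle_ge. apply Rmult_le_pos; apply pow2_ge_0.
Qed.

Lemma final_re (xi C2 q : R) :
  let xp := - C2^2 / xi in let C1 := xi + xp in
  let sx := (q + /q) / 2 in let sy := (q - /q) / 2 in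
  let w := - 2 * sx * sy / C1 in let lam := w^2 in let m := sx^2 + sy^2 in
  let a1 := 1 / ((xi - xp) * (1 + lam * xi^2)) in
  let a2 := 1 / ((xi - xp) * (1 + lam * xp^2)) in
  let c0 := a2 * xi - a1 * xp in let c1 := xi * xp * lam * (a1 - a2) in
  let r := 2 * C2^2 / (2 * xi - C1) in
  0 < xi -> 0 < C2 -> 0 < q -> 0 < C1 ->
  xi * xp * a1 + xi * xp * a2 + C2 * ((m + 1) * c0 + C1 * c1) / (2 * m * sx)
    + r / (1 + w^2 * xi^2)
  = C2 * sx / (sx^2 + (sy - C2 * w)^2).
Proof.
  intros xp C1 sx sy w lam m a1 a2 c0 c1 r Hxi HC2 Hq HC1.
  destruct (final_alg_side xi C2 q Hxi HC2 Hq HC1) as [H1 [H2 H3]].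
  unfold r, c0, c1, a1, a2, m, lam, w, sx, sy, C1, xp.
  field. 
  repeat split; try lra; try possum.
  replace (2 * xi * xi - (xi * xi + - C2 ^ 2)) with (xi * xi + C2^2) by ring. possum.
Qed.

Lemma final_im (xi C2 q : R) :
  let xp := - C2^2 / xi in let C1 := xi + xp in
  let sx := (q + /q) / 2 in let sy := (q - /q) / 2 in
  let w := - 2 * sx * sy / C1 in let lam := w^2 in let m := sx^2 + sy^2 in
  let a1 := 1 / ((xi - xp) * (1 + lam * xi^2)) in
  let a2 := 1 / ((xi - xp) * (1 + lam * xp^2)) in
  let c0 := a2 * xi - a1 * xp in let c0' := xi * xp * (a2 - a1) in
  let r := 2 * C2^2 / (2 * xi - C1) in
  0 < xi -> 0 < C2 -> 0 < q -> 0 < C1 ->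
  w * (xi * xp * (xi * a1 + xp * a2) + C2 * ((m + 1) * c0' + C1 * c0) / (2 * m * sx))
    + r * w * xi / (1 + w^2 * xi^2)
  = - C2 * (sy - C2 * w) / (sx^2 + (sy - C2 * w)^2).
Proof.
  intros xp C1 sx sy w lam m a1 a2 c0 c0' r Hxi HC2 Hq HC1.
  destruct (final_alg_side xi C2 q Hxi HC2 Hq HC1) as [H1 [H2 H3]].
  unfold r, c0, c0', a1, a2, m, lam, w, sx, sy, C1, xp.
  field. 
  repeat split; try lra; try possum.
  replace (2 * xi * xi - (xi * xi + - C2 ^ 2)) with (xi * xi + C2^2) by ring. possum.
Qed.

Lemma bsg_eq (sg X : R) : (sg = 0 -> X = 0) -> (if Req_EM_T sg 0 then 0 else X / (2 * sg)) * (2 * sg) = X.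
Proof.
  intros H. destruct (Req_EM_T sg 0) as [E|E].
  - rewrite H by auto. ring.
  - field. auto.
Qed.

Lemma int_gen (C1 C2 xi sx sg lam A B cc0 cc1 : R) (f : R -> R) :
  let xp := - C2^2 / xi in
  let m := 2 * sx^2 - 1 in
  let a := ((m + 1) * cc0 + C1 * cc1) / (2 * m * sx) in
  let X := ((m - 1) * cc0 - C1 * cc1) / (2 * m) in
  let b := if Req_EM_T sg 0 then 0 else X / (2 * sg) in
  0 < C2 -> 0 < xi -> C1 = xi + xp -> 0 < C1 -> 0 < sx -> 0 <= sg -> sx^2 = sg^2 + 1 ->
  lam = 4 * sx^2 * (sx^2 - 1) / C1^2 -> (sg = 0 -> X = 0) ->
  (forall u, 0 <= u <= C1 -> continuous f u) ->
  (forall u, 0 < u < C1 -> f u * sq C1 u = A / (xi - u) + B / (xp - u) + (cc0 + cc1 * u) / (1 + lam * u^2)) ->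
  is_RInt f 0 C1 (A * PI / C2 - B * PI / C2 + a * PI).
Proof.
  intros xp m a X b HC2 Hxi HC1 HC1p Hsx Hsg Hsxsg Hlam HX Hfc Hf.
  assert (HC2sq : 0 < C2^2) by (apply pow_lt; lra).
  assert (Hxp : xp < 0).
  { unfold xp. apply Ropp_lt_cancel. rewrite Ropp_0. unfold Rdiv. rewrite <- Ropp_mult_distr_l, Ropp_involutive.
    apply Rdiv_lt_0_compat; lra. }
  assert (Hk1 : 0 < C2 / xi) by (apply Rdiv_lt_0_compat; lra).
  assert (Hk2 : 0 < - C2 / xp) by (replace (- C2 / xp) with (C2 / (- xp)) by (field; lra);
     apply Rdiv_lt_0_compat; lra).
  assert (Hm1 : 1 <= m) by (unfold m; pose proof (pow2_ge_0 sg); lra).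
  assert (Hlam0 : 0 <= lam).
  { rewrite Hlam. apply Rmult_le_pos; [|left; apply Rinv_0_lt_compat, pow_lt; lra].
    apply Rmult_le_pos; [pose proof (pow2_ge_0 sx); lra|]. pose proof (pow2_ge_0 sg); lra. }
  pose proof (MainInt C1 xi (C2/xi) xp (-C2/xp) sx sg A B a b 0 f HC1p ltac:(lra) Hxp Hk1 Hk2
     ltac:(rewrite HC1; unfold xp; field; lra) ltac:(rewrite HC1; unfold xp; field; split; lra)
     Hsg Hsx Hsxsg ltac:(lra) Hfc) as H.
  destruct (Fn_cont0 C1 xi (C2/xi) xp (-C2/xp) sx sg A B a b HC1p Hsg Hsxsg ltac:(apply Rgt_not_eq; nra)
     ltac:(apply Rmult_integral_contrapositive_currified; lra)) as [_ HF0].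
  rewrite HF0 in H.
  replace (A * PI / C2 - B * PI / C2 + a * PI) with (A * PI / (C2 / xi * xi) + B * PI / (- C2 / xp * xp) + a * PI - 0)
    by (field; repeat split; lra).
  apply H. intros u Hu.
  pose proof (sq_pos C1 u Hu) as Hs.
  apply (Rmult_eq_reg_r (sq C1 u)); [|lra].
  rewrite Hf by auto.
  rewrite <- Hlam.
  assert (E1 : b * (2 * sg * (C1 - (2 * sx ^ 2 - 1 + 1) * u)) = X * (C1 - (m + 1) * u)).
  { rewrite <- (bsg_eq sg X HX). fold b. unfold m. ring. }
  rewrite E1.
  assert (0 <= lam * u^2) by (apply Rmult_le_pos; [lra|apply pow2_ge_0]).
  assert (2 * sx ^ 2 - 1 <> 0) by (fold m; lra).
  unfold a, X, m. field. repeat split; try lra.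
Qed.

Lemma int_mass (C1 C2 xi A B e : R) (f : R -> R) :
  let xp := - C2^2 / xi in
  0 < C2 -> 0 < xi -> C1 = xi + xp -> 0 < C1 -> 0 <= e < C1 ->
  (forall u, e <= u <= C1 -> continuous f u) ->
  (forall u, e < u < C1 -> f u * sq C1 u = A / (xi - u) + B / (xp - u)) ->
  is_RInt f e C1 (A * PI / C2 - B * PI / C2 - Fn C1 xi (C2/xi) xp (-C2/xp) 1 0 A B 0 0 e).
Proof.
  intros xp HC2 Hxi HC1 HC1p He Hfc Hf.
  assert (HC2sq : 0 < C2^2) by (apply pow_lt; lra).
  assert (Hxp : xp < 0).
  { unfold xp. apply Ropp_lt_cancel. rewrite Ropp_0. unfold Rdiv. rewrite <- Ropp_mult_distr_l, Ropp_involutive.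
    apply Rdiv_lt_0_compat; lra. }
  assert (Hk1 : 0 < C2 / xi) by (apply Rdiv_lt_0_compat; lra).
  assert (Hk2 : 0 < - C2 / xp) by (replace (- C2 / xp) with (C2 / (- xp)) by (field; lra);
     apply Rdiv_lt_0_compat; lra).
  pose proof (MainInt C1 xi (C2/xi) xp (-C2/xp) 1 0 A B 0 0 e f HC1p ltac:(lra) Hxp Hk1 Hk2
     ltac:(rewrite HC1; unfold xp; field; lra) ltac:(rewrite HC1; unfold xp; field; split; lra)
     ltac:(lra) ltac:(lra) ltac:(ring) He Hfc) as H.
  replace (A * PI / C2 - B * PI / C2) with (A * PI / (C2 / xi * xi) + B * PI / (- C2 / xp * xp) + 0 * PI)
    by (field; repeat split; lra).
  apply H. intros u Hu.
  pose proof (sq_pos C1 u ltac:(lra)) as Hs.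
  apply (Rmult_eq_reg_r (sq C1 u)); [|lra].
  rewrite Hf by auto.
  assert (0 <= 4 * 1 ^ 2 * (1 ^ 2 - 1) / C1 ^ 2 * u ^ 2) by (replace (4 * 1 ^ 2 * (1 ^ 2 - 1) / C1 ^ 2 * u ^ 2) with 0 by (field; lra); lra).
  field. repeat split; try lra.
Qed.

Lemma gre_eq (psi : R -> R) w u : psi 0 = 0 ->
  Cre (Cdiv (RtoC (u * (psi u / u))) (Cminus (RtoC 1) (Cmult Ci (RtoC (w * u)))))
  = psi u / (1 + w^2 * u^2).
Proof.
  intros H0.
  assert (Hd : 0 < 1 + w^2 * u^2) by (pose proof (pow2_ge_0 (w*u)); nra).
  assert (E : u * (psi u / u) = psi u).
  { destruct (Req_dec u 0) as [Z|Z]. subst u. rewrite H0. unfold Rdiv. ring. field. auto. }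
  rewrite E. unfold Cre, Cdiv, Cmult, Cinv, Cminus, Cplus, Copp, RtoC, Ci. simpl.
  replace ((1 + - (0 * (w * u) - 1 * 0)) * (1 + - (0 * (w * u) - 1 * 0)) +
    (0 + - (0 * 0 + 1 * (w * u))) * (0 + - (0 * 0 + 1 * (w * u)))) with (1 + w^2*u^2) by ring.
  field. lra.
Qed.

Lemma gim_eq (psi : R -> R) w u : psi 0 = 0 ->
  Cim (Cdiv (RtoC (u * (psi u / u))) (Cminus (RtoC 1) (Cmult Ci (RtoC (w * u)))))
  = w * u * psi u / (1 + w^2 * u^2).
Proof.
  intros H0.
  assert (Hd : 0 < 1 + w^2 * u^2) by (pose proof (pow2_ge_0 (w*u)); nra).
  assert (E : u * (psi u / u) = psi u).
  { destruct (Req_dec u 0) as [Z|Z]. subst u. rewrite H0. unfold Rdiv. ring. field. auto. }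
  rewrite E. unfold Cim, Cdiv, Cmult, Cinv, Cminus, Cplus, Copp, RtoC, Ci. simpl.
  replace ((1 + - (0 * (w * u) - 1 * 0)) * (1 + - (0 * (w * u) - 1 * 0)) +
    (0 + - (0 * 0 + 1 * (w * u))) * (0 + - (0 * 0 + 1 * (w * u)))) with (1 + w^2*u^2) by ring.
  field. lra.
Qed.

Lemma Csqrt_z x : Csqrt (Cminus (RtoC 1) (Cmult Ci (RtoC x))) =
  (sqrt ((sqrt (1 + x^2) + 1) / 2), (if Rlt_dec (- x) 0 then -1 else 1) * sqrt ((sqrt (1 + x^2) - 1) / 2)).
Proof.
  unfold Csqrt, Cmod, Cminus, Cplus, Copp, Cmult, RtoC, Ci. simpl.
  replace ((1 + - (0 * x - 1 * 0)) * (1 + - (0 * x - 1 * 0)) + (0 + - (0 * 0 + 1 * x)) * (0 + - (0 * 0 + 1 * x)))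
    with (1 + x^2) by ring.
  replace (1 + - (0 * x - 1 * 0)) with 1 by ring.
  replace (0 + - (0 * 0 + 1 * x)) with (- x) by ring. reflexivity.
Qed.

Lemma final_wrap (xi C2 C1 sx sy w : R) :
  0 < xi -> 0 < C2 -> 0 < C1 -> C1 = xi + - C2^2 / xi -> sx^2 - sy^2 = 1 -> 0 < sx + sy -> 2 * sx * sy = - C1 * w ->
  let xp := - C2^2 / xi in let lam := w^2 in let m := sx^2 + sy^2 in
  let a1 := 1 / ((xi - xp) * (1 + lam * xi^2)) in let a2 := 1 / ((xi - xp) * (1 + lam * xp^2)) in
  let c0 := a2 * xi - a1 * xp in let c1 := xi * xp * lam * (a1 - a2) in let c0' := xi * xp * (a2 - a1) in
  let r := 2 * C2^2 / (2 * xi - C1) in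
  (xi * xp * a1 + xi * xp * a2 + C2 * ((m + 1) * c0 + C1 * c1) / (2 * m * sx) + r / (1 + w^2 * xi^2)
     = C2 * sx / (sx^2 + (sy - C2 * w)^2)) /\
  (w * (xi * xp * (xi * a1 + xp * a2) + C2 * ((m + 1) * c0' + C1 * c0) / (2 * m * sx)) + r * w * xi / (1 + w^2 * xi^2)
     = - C2 * (sy - C2 * w) / (sx^2 + (sy - C2 * w)^2)).
Proof.
  intros Hxi HC2 HC1 HC1e Hss Hq Hw.
  assert (Hw' : w = - 2 * sx * sy / C1) by (apply (Rmult_eq_reg_l C1); [|lra]; field_simplify; lra).
  assert (Hd : sx - sy = / (sx + sy)).
  { apply (Rmult_eq_reg_l (sx + sy)); [|lra]. rewrite Rinv_r by lra. replace ((sx+sy)*(sx-sy)) with (sx^2 - sy^2) by ring. auto. }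
  assert (Hsx : sx = ((sx + sy) + / (sx + sy)) / 2) by (rewrite <- Hd; field).
  assert (Hsy : sy = ((sx + sy) - / (sx + sy)) / 2) by (rewrite <- Hd; field).
  set (q := sx + sy) in *. clearbody q.
  subst w. clear Hw Hd Hss. subst C1. subst sx sy.
  exact (conj (final_re xi C2 q Hxi HC2 Hq HC1) (final_im xi C2 q Hxi HC2 Hq HC1)).
Qed.

Lemma mass_hyp (xi C2 C1 u : R) : 0 < xi -> 0 < C2 -> C1 = xi + - C2^2 / xi -> 0 < u < C1 ->
  let xp := - C2^2 / xi in
  (C2 * sqrt (u * (C1 - u)) / (PI * (C2 ^ 2 + u * (C1 - u))) / u) * sq C1 u
  = (C2 / PI) * xp / (xi - xp) / (xi - u) + (- (C2 / PI) * xi / (xi - xp)) / (xp - u).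
Proof.
  intros Hxi HC2 HC1 Hu xp.
  pose proof (sq_sq C1 u ltac:(lra)) as Hs2. pose proof (sq_pos C1 u Hu) as Hs.
  assert (HE : 0 < C2 ^ 2 + u * (C1 - u)) by (pose proof (pow2_ge_0 C2); nra).
  pose proof PI_RGT_0.
  change (sqrt (u * (C1 - u))) with (sq C1 u).
  replace (C2 * sq C1 u / (PI * (C2 ^ 2 + u * (C1 - u))) / u * sq C1 u)
    with (C2 * (sq C1 u * sq C1 u) / (PI * (C2 ^ 2 + u * (C1 - u))) / u) by (field; lra).
  rewrite Hs2.
  assert (0 < C2^2) by (apply pow_lt; lra).
  assert (Hxp : xp < 0) by (unfold xp; apply Ropp_lt_cancel; rewrite Ropp_0; unfold Rdiv; rewrite <- Ropp_mult_distr_l, Ropp_involutive; apply Rdiv_lt_0_compat; lra).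
  assert (xp - u <> 0) by lra.
  assert (xi - u <> 0) by (unfold xp in Hxp; lra).
  unfold xp in *. subst C1. field. repeat split; try lra.
  - apply Rgt_not_eq. nra.
  - assert (0 < u * xi) by nra. lra.
  - replace (C2 ^ 2 * xi + u * (xi * xi + - C2 ^ 2 - u * xi)) with (xi * (C2 ^ 2 + u * (xi + - C2 ^ 2 / xi - u)))
      by (field; lra).
    apply Rgt_not_eq. apply Rmult_lt_0_compat; lra.
Qed.

Lemma re_hyp (xi C2 C1 w u : R) : 0 < xi -> 0 < C2 -> C1 = xi + - C2^2 / xi -> 0 < u < C1 ->
  let xp := - C2^2 / xi in let lam := w^2 in let K := C2 / PI in
  let a1 := 1 / ((xi - xp) * (1 + lam * xi^2)) in
  let a2 := 1 / ((xi - xp) * (1 + lam * xp^2)) in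
  (C2 * sqrt (u * (C1 - u)) / (PI * (C2 ^ 2 + u * (C1 - u))) / (1 + w^2 * u^2)) * sq C1 u
  = K * xi * xp * a1 / (xi - u) + (- K * xi * xp * a2) / (xp - u)
    + (K * (a2 * xi - a1 * xp) + K * xi * xp * lam * (a1 - a2) * u) / (1 + lam * u^2).
Proof.
  intros Hxi HC2 HC1 Hu xp lam K a1 a2.
  pose proof (sq_sq C1 u ltac:(lra)) as Hs2. pose proof (sq_pos C1 u Hu) as Hs.
  assert (HE : 0 < C2 ^ 2 + u * (C1 - u)) by (pose proof (pow2_ge_0 C2); nra).
  assert (Hd : 0 < 1 + w^2 * u^2) by (pose proof (pow2_ge_0 (w*u)); nra).
  pose proof PI_RGT_0.
  change (sqrt (u * (C1 - u))) with (sq C1 u).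
  replace (C2 * sq C1 u / (PI * (C2 ^ 2 + u * (C1 - u))) / (1 + w^2 * u^2) * sq C1 u)
    with (K * (sq C1 u * sq C1 u) / ((C2 ^ 2 + u * (C1 - u)) * (1 + lam * u^2))) by (unfold K, lam; field; lra).
  rewrite Hs2.
  assert (0 < C2^2) by (apply pow_lt; lra).
  assert (Hxp : xp < 0) by (unfold xp; apply Ropp_lt_cancel; rewrite Ropp_0; unfold Rdiv; rewrite <- Ropp_mult_distr_l, Ropp_involutive; apply Rdiv_lt_0_compat; lra).
  assert (xp - u <> 0) by lra.
  assert (xi - u <> 0) by (unfold xp in Hxp; lra).
  subst C1. exact (stage1_re K xi C2 lam u Hxi HC2 (pow2_ge_0 w) ltac:(auto) ltac:(auto)).
Qed.

Lemma im_hyp (xi C2 C1 w u : R) : 0 < xi -> 0 < C2 -> C1 = xi + - C2^2 / xi -> 0 < u < C1 ->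
  let xp := - C2^2 / xi in let lam := w^2 in let K := w * C2 / PI in
  let a1 := 1 / ((xi - xp) * (1 + lam * xi^2)) in
  let a2 := 1 / ((xi - xp) * (1 + lam * xp^2)) in
  (w * u * (C2 * sqrt (u * (C1 - u)) / (PI * (C2 ^ 2 + u * (C1 - u)))) / (1 + w^2 * u^2)) * sq C1 u
  = K * xi * xp * xi * a1 / (xi - u) + (- K * xi * xp * xp * a2) / (xp - u)
    + (K * xi * xp * (a2 - a1) + K * (a2 * xi - a1 * xp) * u) / (1 + lam * u^2).
Proof.
  intros Hxi HC2 HC1 Hu xp lam K a1 a2.
  pose proof (sq_sq C1 u ltac:(lra)) as Hs2. pose proof (sq_pos C1 u Hu) as Hs.
  assert (HE : 0 < C2 ^ 2 + u * (C1 - u)) by (pose proof (pow2_ge_0 C2); nra).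
  assert (Hd : 0 < 1 + w^2 * u^2) by (pose proof (pow2_ge_0 (w*u)); nra).
  pose proof PI_RGT_0.
  change (sqrt (u * (C1 - u))) with (sq C1 u).
  replace (w * u * (C2 * sq C1 u / (PI * (C2 ^ 2 + u * (C1 - u)))) / (1 + w^2 * u^2) * sq C1 u)
    with (K * u * (sq C1 u * sq C1 u) / ((C2 ^ 2 + u * (C1 - u)) * (1 + lam * u^2))) by (unfold K, lam; field; lra).
  rewrite Hs2.
  assert (0 < C2^2) by (apply pow_lt; lra).
  assert (Hxp : xp < 0) by (unfold xp; apply Ropp_lt_cancel; rewrite Ropp_0; unfold Rdiv; rewrite <- Ropp_mult_distr_l, Ropp_involutive; apply Rdiv_lt_0_compat; lra).
  assert (xp - u <> 0) by lra.
  assert (xi - u <> 0) by (unfold xp in Hxp; lra).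
  subst C1. exact (stage1_im K xi C2 lam u Hxi HC2 (pow2_ge_0 w) ltac:(auto) ltac:(auto)).
Qed.

Theorem mainTheorem1 (phi alpha_inf K0 eta rho_f Lambda : R)
  (hphi : 0 < phi < 1) (halpha : 0 < alpha_inf) (hK0 : 0 < K0)
  (heta : 0 < eta) (hrho : 0 < rho_f) (hLambda : 0 < Lambda) :
  let nu := eta / rho_f in
  let F := alpha_inf / phi in
  let C2 := F * K0 / nu in
  let C1 := 4 * C2 * F * K0 / Lambda ^ 2 in
  let xi_p := (C1 + sqrt (C1 ^ 2 + 4 * C2 ^ 2)) / 2 in
  let psi := fun u : R =>
    C2 * sqrt (u * (C1 - u)) / (PI * (C2 ^ 2 + u * (C1 - u))) in
  let r := 2 * C2 * sqrt (xi_p * (xi_p - C1)) / (2 * xi_p - C1) in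
  C1 < xi_p /\
  ((forall u, 0 < u <= C1 -> 0 <= psi u / u) /\ 0 <= r / xi_p /\
   improper_int_at0 (fun u => psi u / u) C1 (1 - r / xi_p)) /\
  (forall omega : R,
     let gre := fun u => Cre (Cdiv (RtoC (u * (psi u / u)))
                                   (Cminus (RtoC 1) (Cmult Ci (RtoC (omega * u))))) in
     let gim := fun u => Cim (Cdiv (RtoC (u * (psi u / u)))
                                   (Cminus (RtoC 1) (Cmult Ci (RtoC (omega * u))))) in
     exists (pre : Riemann_integrable gre 0 C1) (pim : Riemann_integrable gim 0 C1),
       KD phi alpha_inf K0 eta rho_f Lambda omega =
       Cmult (RtoC (nu / F))
         (Cplus (RiemannInt pre, RiemannInt pim)
            (Cdiv (RtoC (xi_p * (r / xi_p)))
                  (Cminus (RtoC 1) (Cmult Ci (RtoC (omega * xi_p))))))).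
Proof.
  intros nu F C2 C1 xi psi r.
  assert (Hnu : 0 < nu) by (unfold nu; apply Rdiv_lt_0_compat; lra).
  assert (HF : 0 < F) by (unfold F; apply Rdiv_lt_0_compat; lra).
  assert (HC2 : 0 < C2) by (unfold C2; apply Rdiv_lt_0_compat; [apply Rmult_lt_0_compat|]; lra).
  assert (HC1 : 0 < C1).
  { unfold C1. apply Rdiv_lt_0_compat; [|apply pow_lt; lra]. 
    apply Rmult_lt_0_compat; [apply Rmult_lt_0_compat; [apply Rmult_lt_0_compat|]|]; lra. }
  pose proof PI_RGT_0 as HPI.
  set (D := sqrt (C1 ^ 2 + 4 * C2 ^ 2)) in *.
  assert (HD2 : D * D = C1 ^ 2 + 4 * C2 ^ 2) by (unfold D; apply sqrt_sqrt; pose proof (pow2_ge_0 C1); pose proof (pow2_ge_0 C2); lra).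
  assert (HD0 : 0 <= D) by (unfold D; apply sqrt_pos).
  assert (HDC1 : C1 < D) by (assert (0 < C2^2) by (apply pow_lt; lra); nra).
  assert (Hxi : xi = (C1 + D) / 2) by reflexivity.
  clearbody D.
  assert (Hxi0 : 0 < xi) by lra.
  assert (HxiC1 : C1 < xi) by lra.
  assert (Hquad : xi * (xi - C1) = C2 ^ 2).
  { rewrite Hxi. replace ((C1 + D) / 2 * ((C1 + D) / 2 - C1)) with ((D * D - C1^2) / 4) by field.
    rewrite HD2. field. }
  assert (Hrel : C1 = xi + - C2 ^ 2 / xi) by (rewrite <- Hquad; field; lra).
  assert (Hr : r = 2 * C2 ^ 2 / (2 * xi - C1)).
  { unfold r. rewrite Hquad. rewrite sqrt_pow2 by lra. field. lra. }
  clearbody r.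
  split; [exact HxiC1|].
  assert (Hxp : 0 < C2 ^ 2 / xi) by (apply Rdiv_lt_0_compat; [apply pow_lt|]; lra).
  assert (Hpsi0 : psi 0 = 0) by (unfold psi; rewrite Rmult_0_l, sqrt_0; unfold Rdiv; ring).
  split; [split; [|split]|].
  - intros u Hu. unfold psi. apply Rmult_le_pos; [|left; apply Rinv_0_lt_compat; lra].
    apply Rmult_le_pos; [apply Rmult_le_pos; [lra|apply sqrt_pos]|].
    left. apply Rinv_0_lt_compat. apply Rmult_lt_0_compat; [lra|]. pose proof (pow2_ge_0 C2). nra.
  - rewrite Hr. apply Rmult_le_pos; [|left; apply Rinv_0_lt_compat; lra].
    apply Rmult_le_pos; [|left; apply Rinv_0_lt_compat; lra]. pose proof (pow2_ge_0 C2); lra.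
  - set (xp := - C2 ^ 2 / xi).
    assert (Hxpn : xp < 0) by (unfold xp; lra).
    set (A := (C2 / PI) * xp / (xi - xp)). set (B := - (C2 / PI) * xi / (xi - xp)).
    assert (Hval : A * PI / C2 - B * PI / C2 = 1 - r / xi).
    { unfold A, B. rewrite Hr. rewrite Hrel. unfold xp. field. repeat split; try lra.
      replace (2 * xi * xi - (xi * xi + - C2 ^ 2)) with (xi * xi + C2^2) by ring.
      apply Rgt_not_eq. pose proof (pow2_ge_0 C2). nra. }
    assert (Hint : forall e, 0 < e < C1 -> is_RInt (fun u => psi u / u) e C1
       (A * PI / C2 - B * PI / C2 - Fn C1 xi (C2/xi) xp (-C2/xp) 1 0 A B 0 0 e)).
    { intros e He. apply int_mass; auto; try lra.
      - intros u Hu. unfold psi. contR.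
        + apply Rgt_not_eq. apply Rmult_lt_0_compat; [lra|]. pose proof (pow2_ge_0 C2). nra.
        + lra.
      - intros u Hu. unfold psi. exact (mass_hyp xi C2 C1 u Hxi0 HC2 Hrel ltac:(lra)). }
    assert (Hnz1 : C2 / xi * xi <> 0) by (apply Rgt_not_eq; replace (C2/xi*xi) with C2 by (field; lra); lra).
    assert (Hnz2 : - C2 / xp * xp <> 0) by (replace (- C2 / xp * xp) with (- C2) by (field; lra); lra).
    destruct (Fn_cont0 C1 xi (C2/xi) xp (-C2/xp) 1 0 A B 0 0 HC1 (Rle_refl 0) ltac:(ring) Hnz1 Hnz2) as [Hc H0].
    split.
    + intros e He. constructor. apply ex_RInt_Reals_0. eexists. apply Hint; auto.
    + intros eps Heps. destruct (cont_eps _ 0 Hc eps Heps) as [d [Hd Hd']].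
      exists d. split; auto. intros e pr He HeC1.
      rewrite <- (RInt_Reals _ _ _ pr). rewrite (is_RInt_unique _ _ _ _ (Hint e ltac:(lra))).
      rewrite <- Hval.
      replace (A * PI / C2 - B * PI / C2 - Fn C1 xi (C2 / xi) xp (- C2 / xp) 1 0 A B 0 0 e - (A * PI / C2 - B * PI / C2))
        with (- (Fn C1 xi (C2 / xi) xp (- C2 / xp) 1 0 A B 0 0 e - Fn C1 xi (C2 / xi) xp (- C2 / xp) 1 0 A B 0 0 0))
        by (rewrite H0; ring).
      rewrite Rabs_Ropp. apply Hd'. rewrite Rminus_0_r, Rabs_right; lra.
  - intros omega gre gim.
    assert (Ecoef1 : 4 * alpha_inf ^ 2 * K0 ^ 2 * rho_f * omega / (eta * Lambda ^ 2 * phi ^ 2) = C1 * omega).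
    { unfold C1, C2, F, nu. field. repeat split; lra. }
    assert (Ecoef2 : alpha_inf * K0 * rho_f * omega / (eta * phi) = C2 * omega).
    { unfold C2, F, nu. field. repeat split; lra. }
    assert (HK0 : K0 = C2 * nu / F) by (unfold C2; field; lra).
    set (m0 := sqrt (1 + (C1 * omega) ^ 2)).
    assert (Hm0 : m0 * m0 = 1 + (C1 * omega) ^ 2) by (unfold m0; apply sqrt_sqrt; pose proof (pow2_ge_0 (C1*omega)); lra).
    assert (Hm01 : 1 <= m0).
    { assert (0 <= m0) by (unfold m0; apply sqrt_pos). pose proof (pow2_ge_0 (C1*omega)). nra. }
    set (sx := sqrt ((m0 + 1) / 2)). set (sg := sqrt ((m0 - 1) / 2)).
    assert (Hsx2 : sx ^ 2 = (m0 + 1) / 2) by (unfold sx; rewrite pow2_sqrt; lra).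
    assert (Hsg2 : sg ^ 2 = (m0 - 1) / 2) by (unfold sg; rewrite pow2_sqrt; lra).
    assert (Hsx : 0 < sx) by (unfold sx; apply sqrt_lt_R0; lra).
    assert (Hsg : 0 <= sg) by (unfold sg; apply sqrt_pos).
    assert (Hsxsg : sx ^ 2 = sg ^ 2 + 1) by lra.
    set (sy := (if Rlt_dec (- (C1 * omega)) 0 then -1 else 1) * sg).
    assert (Hsy2 : sy ^ 2 = sg ^ 2) by (unfold sy; destruct (Rlt_dec (- (C1 * omega)) 0); ring).
    assert (Hsxsg' : 2 * sx * sg = Rabs (C1 * omega)).
    { apply Rsqr_inj. apply Rmult_le_pos; lra. apply Rabs_pos. rewrite <- Rsqr_abs. unfold Rsqr.
      replace (2 * sx * sg * (2 * sx * sg)) with (4 * sx^2 * sg^2) by ring. rewrite Hsx2, Hsg2.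
      replace (C1 * omega * (C1 * omega)) with (m0 * m0 - 1) by (rewrite Hm0; ring). field. }
    assert (H2sxsy : 2 * sx * sy = - C1 * omega).
    { unfold sy. destruct (Rlt_dec (- (C1 * omega)) 0).
      - rewrite Rabs_right in Hsxsg' by lra. lra.
      - rewrite Rabs_left1 in Hsxsg' by lra. lra. }
    assert (Hsxgt : sg < sx).
    { apply Rsqr_incrst_0; auto; try lra. unfold Rsqr. nra. }
    assert (Hq : 0 < sx + sy) by (unfold sy; destruct (Rlt_dec (- (C1 * omega)) 0); lra).
    assert (Hlam : omega ^ 2 = 4 * sx ^ 2 * (sx ^ 2 - 1) / C1 ^ 2).
    { rewrite Hsx2. apply (Rmult_eq_reg_r (C1^2)); [|apply Rgt_not_eq, pow_lt; lra].
      replace (omega ^ 2 * C1 ^ 2) with (m0 * m0 - 1) by (rewrite Hm0; ring). field. lra. }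
    assert (Hw0 : sg = 0 -> omega = 0).
    { intros E. rewrite E in Hsxsg. assert (omega ^ 2 = 0) by (rewrite Hlam, Hsxsg; field; lra).
      apply Rsqr_0_uniq. unfold Rsqr. rewrite <- H. ring. }
    set (xp := - C2 ^ 2 / xi). set (lam := omega ^ 2).
    set (a1 := 1 / ((xi - xp) * (1 + lam * xi ^ 2))). set (a2 := 1 / ((xi - xp) * (1 + lam * xp ^ 2))).
    set (K := C2 / PI). set (K' := omega * C2 / PI).
    assert (HQ : forall u, 0 <= u <= C1 -> PI * (C2 ^ 2 + u * (C1 - u)) <> 0).
    { intros u Hu. apply Rgt_not_eq. apply Rmult_lt_0_compat; [lra|]. pose proof (pow2_ge_0 C2). nra. }
    assert (HW : forall u, 1 + omega ^ 2 * u ^ 2 <> 0).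
    { intros u. apply Rgt_not_eq. pose proof (pow2_ge_0 (omega * u)). nra. }
    pose proof (int_gen C1 C2 xi sx sg lam (K*xi*xp*a1) (-K*xi*xp*a2) (K*(a2*xi - a1*xp)) (K*xi*xp*lam*(a1-a2)) gre
      HC2 Hxi0 Hrel HC1 Hsx Hsg Hsxsg Hlam) as Hre.
    pose proof (int_gen C1 C2 xi sx sg lam (K'*xi*xp*xi*a1) (-K'*xi*xp*xp*a2) (K'*xi*xp*(a2-a1)) (K'*(a2*xi - a1*xp)) gim
      HC2 Hxi0 Hrel HC1 Hsx Hsg Hsxsg Hlam) as Him.
    assert (Hre' : is_RInt gre 0 C1 (K*xi*xp*a1 * PI / C2 - (-K*xi*xp*a2) * PI / C2
       + ((2*sx^2-1+1) * (K*(a2*xi - a1*xp)) + C1 * (K*xi*xp*lam*(a1-a2))) / (2*(2*sx^2-1)*sx) * PI)).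
    { apply Hre.
      - intros E. pose proof (Hw0 E) as Ew. assert (Hl0 : lam = 0) by (unfold lam; rewrite Ew; ring).
        rewrite E in Hsxsg. rewrite Hl0, Hsxsg. unfold Rdiv. ring.
      - intros u Hu. apply (continuous_ext (fun u => psi u / (1 + omega^2 * u^2))).
        { intros t. unfold gre. rewrite gre_eq; auto. }
        unfold psi. contR. apply HQ; auto. apply HW.
      - intros u Hu. unfold gre. rewrite gre_eq by auto. unfold psi.
        exact (re_hyp xi C2 C1 omega u Hxi0 HC2 Hrel Hu). }
    assert (Him' : is_RInt gim 0 C1 (K'*xi*xp*xi*a1 * PI / C2 - (-K'*xi*xp*xp*a2) * PI / C2
       + ((2*sx^2-1+1) * (K'*xi*xp*(a2-a1)) + C1 * (K'*(a2*xi - a1*xp))) / (2*(2*sx^2-1)*sx) * PI)).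
    { apply Him.
      - intros E. pose proof (Hw0 E) as Ew. unfold K'. rewrite Ew. unfold Rdiv. ring.
      - intros u Hu. apply (continuous_ext (fun u => omega * u * psi u / (1 + omega^2 * u^2))).
        { intros t. unfold gim. rewrite gim_eq; auto. }
        unfold psi. contR. apply HQ; auto. apply HW.
      - intros u Hu. unfold gim. rewrite gim_eq by auto. unfold psi.
        exact (im_hyp xi C2 C1 omega u Hxi0 HC2 Hrel Hu). }
    clear Hre Him.
    set (Vre := K*xi*xp*a1 * PI / C2 - (-K*xi*xp*a2) * PI / C2
       + ((2*sx^2-1+1) * (K*(a2*xi - a1*xp)) + C1 * (K*xi*xp*lam*(a1-a2))) / (2*(2*sx^2-1)*sx) * PI) in Hre'.
    set (Vim := K'*xi*xp*xi*a1 * PI / C2 - (-K'*xi*xp*xp*a2) * PI / C2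
       + ((2*sx^2-1+1) * (K'*xi*xp*(a2-a1)) + C1 * (K'*(a2*xi - a1*xp))) / (2*(2*sx^2-1)*sx) * PI) in Him'.
    assert (Hss : sx^2 - sy^2 = 1) by lra.
    destruct (final_wrap xi C2 C1 sx sy omega Hxi0 HC2 HC1 Hrel Hss Hq ltac:(lra)) as [W1 W2].
    set (den := sx ^ 2 + (sy - C2 * omega) ^ 2) in *.
    assert (Hden : 0 < den) by (unfold den; pose proof (pow2_ge_0 (sy - C2 * omega)); assert (0 < sx^2) by (apply pow_lt; lra); lra).
    assert (Hxp0 : xp < 0) by (unfold xp; lra).
    assert (Hl0 : 0 <= lam) by (unfold lam; apply pow2_ge_0).
    assert (Hsxm : 2 * sx ^ 2 - 1 <> 0) by (pose proof (pow2_ge_0 sg); lra).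
    assert (Hmm : sx ^ 2 + sy ^ 2 = 2 * sx ^ 2 - 1) by lra.
    assert (HE1 : xi - xp <> 0) by lra.
    assert (HE2 : 1 + lam * xi ^ 2 <> 0) by (pose proof (pow2_ge_0 xi); apply Rgt_not_eq; nra).
    assert (HE3 : 1 + lam * xp ^ 2 <> 0) by (pose proof (pow2_ge_0 xp); apply Rgt_not_eq; nra).
    assert (EV1 : Vre = C2 * sx / den - r / (1 + omega ^ 2 * xi ^ 2)).
    { rewrite Hr. cbv zeta in W1. rewrite Hmm in W1. rewrite <- W1. clear W2 Hre' Him'.
      unfold Vre, K, a1, a2, lam, xp. clearbody C1 C2. field.
      repeat split; try lra; try possum.
      replace (xi * xi - - C2 ^ 2) with (xi * xi + C2 ^ 2) by ring. possum. }
    assert (EV2 : Vim = - C2 * (sy - C2 * omega) / den - r * omega * xi / (1 + omega ^ 2 * xi ^ 2)).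
    { rewrite Hr. cbv zeta in W2. rewrite Hmm in W2. rewrite <- W2. clear W1 Hre' Him'.
      unfold Vim, K', a1, a2, lam, xp. clearbody C1 C2. field.
      repeat split; try lra; try possum.
      replace (xi * xi - - C2 ^ 2) with (xi * xi + C2 ^ 2) by ring. possum. }
    exists (ex_RInt_Reals_0 _ _ _ (ex_intro _ _ Hre')), (ex_RInt_Reals_0 _ _ _ (ex_intro _ _ Him')).
    rewrite <- !RInt_Reals. rewrite (is_RInt_unique _ _ _ _ Hre'), (is_RInt_unique _ _ _ _ Him').
    rewrite EV1, EV2.
    unfold KD. rewrite Ecoef1, Ecoef2, Csqrt_z. fold m0. fold sx sg sy.
    unfold Cdiv, Cmult, Cinv, Cminus, Cplus, Copp, RtoC, Ci. simpl.
    rewrite HK0. unfold den in *. clear Hre' Him' W1 W2 EV1 EV2. clearbody nu F C1 C2.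
    assert (Hw1 : 0 < 1 + (omega * xi) ^ 2) by (pose proof (pow2_ge_0 (omega * xi)); lra).
    f_equal; field; repeat split; try lra.
Qed.
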